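(* Let $P$ be a special product rule. For every $P$-automaton $\mathcal A=\langle X,F,\Delta\rangle$ and all terms $u,v\in\mathrm{Terms}(X)$ with $u\approx v$, we have $[\![u]\!]_{\mathcal A}=[\![v]\!]_{\mathcal A}$.
   Context: Let $\Sigma$ be a finite alphabet, $\Sigma^*$ its finite words with empty word $\varepsilon$. A series is $f:\Sigma^*\to\mathbb Q$; $\delta_af$ ($a\in\Sigma$) is $w\mapsto f(aw)$. Terms: $\mathrm{Terms}(X)$ generated by $u,v::=x\mid 0\mid c\cdot u\mid u+v\mid u*v$ ($c\in\mathbb Q$). A product rule is a term $P$ over $\{x,\dot x,y,\dot y\}$; $P(s_1,\dots,s_4)$ denotes substitution. $u\approx v$ iff $u,v$ denote the same polynomial in $\mathbb Q[X]$ (constructors read as polynomial operations). $P$ is special if $P(x+y,\dot x+\dot y,z,\dot z)\approx P(x,\dot x,z,\dot z)+P(y,\dot y,z,\dot z)$, $P(x,\dot x,y*z,P(y,\dot y,z,\dot z))\approx P(x*y,P(x,\dot x,y,\dot y),z,\dot z)$, $P(x,\dot x,y,\dot y)\approx P(y,\dot y,x,\dot x)$. $P$-automaton: $\mathcal A=\langle X,F,\Delta\rangle$ with $F:X\to\mathbb Q$, $\Delta_a:X\to\mathrm{Terms}(X)$ for $a\in\Sigma$. The $P$-extension $\tilde D$ of $D:X\to\mathrm{Terms}(X)$ is $\tilde D0=0$, $\tilde Dx=Dx$, $\tilde D(c\alpha)=c\tilde D\alpha$, $\tilde D(\alpha+\beta)=\tilde D\alpha+\tilde D\beta$, $\tilde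 D(\alpha*\beta)=P(\alpha,\tilde D\alpha,\beta,\tilde D\beta)$. $F$ is extended to terms by evaluation in $\mathbb Q$. $[\![\alpha]\!]_{\mathcal A}$ is the unique series with $([\![\alpha]\!]_{\mathcal A})_\varepsilon=F(\alpha)$ and $\delta_a[\![\alpha]\!]_{\mathcal A}=[\![\tilde\Delta_a\alpha]\!]_{\mathcal A}$ for all $a$ (equivalently $[\![\alpha]\!]_{\mathcal A}(a_1\cdots a_n)=F(\tilde\Delta_{a_n}\cdots\tilde\Delta_{a_1}\alpha)$). *)

(* Defs.v *)
From HB Require Import structures.
From mathcomp Require Import all_boot all_order all_algebra.
From mathcomp Require Import mpoly.
Set Implicit Arguments. Unset Strict Implicit. Unset Printing Implicit Defensive.
Import GRing.Theory.
Local Open Scope ring_scope.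

Inductive term (V : Type) : Type :=
| Var of V
| Zero
| Scale of rat & term V
| Add of term V & term V
| Mul of term V & term V.
Arguments Zero {V}.

Fixpoint subst (V W : Type) (s : V -> term W) (t : term V) : term W :=
  match t with
  | Var x => s x
  | Zero => Zero
  | Scale c u => Scale c (subst s u)
  | Add u v => Add (subst s u) (subst s v)
  | Mul u v => Mul (subst s u) (subst s v)
  end.

Fixpoint poly_of (V : finType) (t : term V) : {mpoly rat[#|V|]} :=
  match t with
  | Var x => 'X_(enum_rank x)
  | Zero => 0
  | Scale c u => c *: poly_of u
  | Add u v => poly_of u + poly_of v
  | Mul u v => poly_of u * poly_of v
  end.

Definition approx (V : finType) (u v : term V) : Prop := poly_of u = poly_of v.

(* A product rule: a term over the four variables x, x', y, y'
   (indices 0, 1, 2, 3 of 'I_4 respectively). *)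
Definition product_rule := term 'I_4.

Definition papp (P : product_rule) (W : Type) (s1 s2 s3 s4 : term W) : term W :=
  subst (fun i : 'I_4 => nth Zero [:: s1; s2; s3; s4] i) P.

Definition v6 (k : nat) : term 'I_6 := Var (@inord 5 k).

Definition special (P : product_rule) : Prop :=
  let x := v6 0 in let xd := v6 1 in let y := v6 2 in
  let yd := v6 3 in let z := v6 4 in let zd := v6 5 in
  [/\ approx (papp P (Add x y) (Add xd yd) z zd)
             (Add (papp P x xd z zd) (papp P y yd z zd)),
      approx (papp P x xd (Mul y z) (papp P y yd z zd))
             (papp P (Mul x y) (papp P x xd y yd) z zd)
    & approx (papp P x xd y yd) (papp P y yd x xd)].

Record automaton (Sigma X : Type) := Automaton {
  aF : X -> rat;
  aDelta : Sigma -> X -> term X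
}.

Fixpoint pext (P : product_rule) (X : Type) (D : X -> term X) (t : term X) : term X :=
  match t with
  | Var x => D x
  | Zero => Zero
  | Scale c u => Scale c (pext P D u)
  | Add u v => Add (pext P D u) (pext P D v)
  | Mul u v => let du := pext P D u in let dv := pext P D v in papp P u du v dv
  end.

Fixpoint evalF (X : Type) (F : X -> rat) (t : term X) : rat :=
  match t with
  | Var x => F x
  | Zero => 0
  | Scale c u => c * evalF F u
  | Add u v => evalF F u + evalF F v
  | Mul u v => evalF F u * evalF F v
  end.

Definition sem (P : product_rule) (Sigma X : Type) (A : automaton Sigma X)
    (alpha : term X) : seq Sigma -> rat :=
  fun w => evalF (aF A) (foldl (fun t a => pext P (aDelta A a) t) alpha w).

(* Main.v *)
Require Import Defs.
From HB Require Import structures.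
From mathcomp Require Import all_boot all_order all_algebra.
From mathcomp Require Import mpoly ssrAC.
From Stdlib Require Import FunctionalExtensionality.
Set Implicit Arguments. Unset Strict Implicit. Unset Printing Implicit Defensive.
Import GRing.Theory.
Local Open Scope ring_scope.

Fixpoint tev (S : nzRingType) (f : rat -> S) (V : Type) (e : V -> S) (t : term V) : S :=
  match t with
  | Var x => e x
  | Zero => 0
  | Scale c u => f c * tev f e u
  | Add u v => tev f e u + tev f e v
  | Mul u v => tev f e u * tev f e v
  end.

Lemma tev_poly (S : comNzRingType) (f : {rmorphism rat -> S}) (V : finType)
  (e : V -> S) (t : term V) :
  mmap f (fun i => e (enum_val i)) (poly_of t) = tev f e t.
Proof.
elim: t => [x| |c u IH|u IHu v IHv|u IHu v IHv] /=.
- by rewrite mmapX mmap1U enum_rankK.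
- by rewrite mmap0.
- by rewrite mmapZ IH.
- by rewrite mmapD IHu IHv.
- by rewrite rmorphM /= IHu IHv.
Qed.

Lemma approx_tev (S : comNzRingType) (f : {rmorphism rat -> S}) (V : finType)
  (e : V -> S) (u v : term V) : approx u v -> tev f e u = tev f e v.
Proof. by rewrite /approx -!(tev_poly f e) => ->. Qed.

Lemma tev_ext (S : nzRingType) (f : rat -> S) (V : Type) (e e' : V -> S) t :
  e =1 e' -> tev f e t = tev f e' t.
Proof. by move=> E; elim: t => //= [c u ->|u -> v ->|u -> v ->]. Qed.

Lemma tev_subst (S : nzRingType) (f : rat -> S) (V W : Type) (e : W -> S)
  (s : V -> term W) t : tev f e (subst s t) = tev f (fun x => tev f e (s x)) t.
Proof. by elim: t => //= [c u ->|u -> v ->|u -> v ->]. Qed.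

Lemma subst_subst (U V W : Type) (s : V -> term W) (s' : U -> term V) t :
  subst s (subst s' t) = subst (fun x => subst s (s' x)) t.
Proof. by elim: t => //= [c u ->|u -> v ->|u -> v ->]. Qed.

Lemma subst_ext (V W : Type) (s s' : V -> term W) t :
  s =1 s' -> subst s t = subst s' t.
Proof. by move=> E; elim: t => //= [c u ->|u -> v ->|u -> v ->]. Qed.

Lemma subst_Var (V : Type) (t : term V) : subst (@Var V) t = t.
Proof. by elim: t => //= [c u ->|u -> v ->|u -> v ->]. Qed.

Lemma poly_subst (V W : finType) (s : V -> term W) t :
  poly_of (subst s t) = tev (@mpolyC _ rat) (fun x => poly_of (s x)) t.
Proof.
elim: t => //= [c u ->|u -> v ->|u -> v ->] //.
by rewrite mul_mpolyC.
Qed.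

Lemma approx_subst (V W : finType) (s : V -> term W) u v :
  approx u v -> approx (subst s u) (subst s v).
Proof. by move=> H; rewrite /approx !poly_subst; apply: approx_tev. Qed.

Lemma evalF_tev (V : Type) (F : V -> rat) t : evalF F t = tev idfun F t.
Proof. by elim: t => //= [c u ->|u -> v ->|u -> v ->]. Qed.

Lemma approx_evalF (V : finType) (F : V -> rat) u v :
  approx u v -> evalF F u = evalF F v.
Proof. by move=> H; rewrite !evalF_tev; apply: approx_tev. Qed.
Record preAlg := PreAlg {
  pa_car : lmodType rat;
  pa_mul : pa_car -> pa_car -> pa_car;
  pa_mulC : commutative pa_mul;
  pa_mulA : associative pa_mul;
  pa_mulDl : forall x y z, pa_mul (x + y) z = pa_mul x z + pa_mul y z;
  pa_mulZl : forall (k : rat) x y, pa_mul (k *: x) y = k *: pa_mul x y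
}.

Section PA.
Variable A : preAlg.
Local Notation B := (pa_car A).
Local Notation "x ** y" := (pa_mul x y) (at level 40, left associativity).
Lemma pa_mulDr (x y z : B) : x ** (y + z) = x ** y + x ** z.
Proof. by rewrite pa_mulC pa_mulDl !(pa_mulC x). Qed.
Lemma pa_mulZr (k : rat) (x y : B) : x ** (k *: y) = k *: (x ** y).
Proof. by rewrite pa_mulC pa_mulZl pa_mulC. Qed.
Lemma pa_mul0l (x : B) : 0 ** x = 0.
Proof. by rewrite -[X in pa_mul X _](scale0r (0 : B)) pa_mulZl scale0r. Qed.
Lemma pa_mul0r (x : B) : x ** 0 = 0.
Proof. by rewrite pa_mulC pa_mul0l. Qed.
End PA.

Definition UU (A : preAlg) := (rat * pa_car A)%type.
HB.instance Definition _ (A : preAlg) := GRing.Zmodule.copy (UU A) (rat * pa_car A)%type.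

Section UUdef.
Variable A : preAlg.
Local Notation B := (pa_car A).
Local Notation "x ** y" := (pa_mul x y) (at level 40, left associativity).
Definition uone : UU A := (1, 0).
Definition umul (x y : UU A) : UU A :=
  (x.1 * y.1, x.1 *: y.2 + y.1 *: x.2 + x.2 ** y.2).

Lemma umulC : commutative umul.
Proof.
move=> [a x] [b y]; rewrite /umul /=; congr (_, _); first by rewrite mulrC.
by rewrite pa_mulC [X in X + _]addrC.
Qed.

Lemma umulA : associative umul.
Proof.
move=> [a x] [b y] [c z]; rewrite /umul /=; congr (_, _); first by rewrite mulrA.
rewrite !scalerDr !pa_mulDl !pa_mulDr !pa_mulZl !pa_mulZr !scalerA pa_mulA.
rewrite !addrA.

rewrite [c * a]mulrC [c * b]mulrC.
by rewrite [LHS](ACl (1*2*4*6*3*5*7)).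
Qed.

Lemma umul1 : left_id uone umul.
Proof.
move=> [a x]; rewrite /umul /uone /=.
by rewrite mul1r scale1r scaler0 addr0 pa_mul0l addr0.
Qed.

Lemma umulDl : left_distributive umul +%R.
Proof.
move=> [a x] [b y] [c z]; rewrite /umul /=; congr (_, _); first by rewrite mulrDl.
rewrite scalerDl scalerDr pa_mulDl.
by rewrite !addrA [LHS](ACl (1*3*5*2*4*6)).
Qed.

Lemma uone_neq0 : uone != 0.
Proof. by apply/negP => /eqP [] /eqP; rewrite oner_eq0. Qed.

End UUdef.

HB.instance Definition _ (A : preAlg) := GRing.Zmodule_isComNzRing.Build (UU A)
  (@umulA A) (@umulC A) (@umul1 A) (@umulDl A) (@uone_neq0 A).

Definition uinj (A : preAlg) (c : rat) : UU A := (c, 0).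

Lemma uinj_is_zmod (A : preAlg) : zmod_morphism (@uinj A).
Proof. by move=> a b; rewrite /uinj; congr (_, _); rewrite subr0. Qed.

Lemma uinj_is_mul (A : preAlg) : multiplicative (@uinj A).
Proof.
split=> [a b|] //; rewrite /uinj /umul /=.
by congr (_, _); rewrite !scaler0 pa_mul0l !addr0.
Qed.

HB.instance Definition _ (A : preAlg) :=
  GRing.isAdditive.Build rat (UU A) (@uinj A) (@uinj_is_zmod A).
HB.instance Definition _ (A : preAlg) :=
  GRing.isMultiplicative.Build rat (UU A) (@uinj A) (@uinj_is_mul A).


Section PhSec.
Variable P : product_rule.
Hypothesis sP : special P.

Definition Ph (S : nzRingType) (f : rat -> S) (a b c d : S) : S :=
  tev f (fun i : 'I_4 => nth 0 [:: a; b; c; d] i) P.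

Lemma tev_papp (S : nzRingType) (f : rat -> S) (V : Type) (e : V -> S)
  (s1 s2 s3 s4 : term V) :
  tev f e (papp P s1 s2 s3 s4) = Ph f (tev f e s1) (tev f e s2) (tev f e s3) (tev f e s4).
Proof.
rewrite /papp tev_subst /Ph; apply: tev_ext.
by case=> [[|[|[|[|k]]]] Hk].
Qed.

Definition e6 (S : nzRingType) (l : seq S) : 'I_6 -> S := fun i => nth 0 l i.

Lemma tev_v6 (S : nzRingType) (f : rat -> S) (l : seq S) k :
  (k < 6)%N -> tev f (e6 l) (v6 k) = nth 0 l k.
Proof. by move=> Hk; rewrite /= /e6 inordK. Qed.

Section Generic.
Variable S : comNzRingType.
Variable f : {rmorphism rat -> S}.

Lemma PhD (a b c d e g : S) : Ph f (a + c) (b + d) e g = Ph f a b e g + Ph f c d e g.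
Proof.
case: sP => H1 _ _.
have := approx_tev f (e6 [:: a; b; c; d; e; g]) H1.
by rewrite /= !tev_papp /= /e6 !inordK.
Qed.

Lemma PhA (a b c d e g : S) :
  Ph f a b (c * e) (Ph f c d e g) = Ph f (a * c) (Ph f a b c d) e g.
Proof.
case: sP => _ H2 _.
have := approx_tev f (e6 [:: a; b; c; d; e; g]) H2.
by rewrite /= !tev_papp /= /e6 !inordK.
Qed.

Lemma PhC (a b c d : S) : Ph f a b c d = Ph f c d a b.
Proof.
case: sP => _ _ H3.
have := approx_tev f (e6 [:: a; b; c; d; 0; 0]) H3.
by rewrite /= !tev_papp /= /e6 !inordK.
Qed.

Lemma Ph0 (c d : S) : Ph f 0 0 c d = 0.
Proof.
have := PhD 0 0 0 0 c d; rewrite !addr0.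
by move/(congr1 (fun z => z - Ph f 0 0 c d)); rewrite addrK subrr.
Qed.

Lemma PhN (a b c d : S) : Ph f (- a) (- b) c d = - Ph f a b c d.
Proof.
have := PhD a b (- a) (- b) c d; rewrite !subrr Ph0 => /eqP.
by rewrite eq_sym addrC -subr_eq0 subr0 addr_eq0 => /eqP.
Qed.

Lemma PhMn (a b c d : S) n : Ph f (a *+ n) (b *+ n) c d = Ph f a b c d *+ n.
Proof.
elim: n => [|n IH]; first by rewrite !mulr0n Ph0.
by rewrite !mulrS PhD IH.
Qed.

Lemma PhMz (a b c d : S) (z : int) : Ph f (a *~ z) (b *~ z) c d = Ph f a b c d *~ z.
Proof.
case: z => n.
  by rewrite -[a *~ _]pmulrn -[b *~ _]pmulrn -[_ *~ _]pmulrn PhMn.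
rewrite NegzE !mulrNz PhN.
by rewrite -[a *~ _]pmulrn -[b *~ _]pmulrn -[_ *~ _]pmulrn PhMn.
Qed.

Lemma PhZ (k : rat) (a b c d : S) :
  Ph f (f k * a) (f k * b) c d = f k * Ph f a b c d.
Proof.
set m := denq k; set z := numq k.
have m0 : (m%:~R : rat) != 0 by rewrite intr_eq0 denq_neq0.
have kE : k = z%:~R / m%:~R by rewrite divq_num_den.
set X := Ph f _ _ c d.
have HX : f m%:~R * X = f z%:~R * Ph f a b c d.
  have km : k * m%:~R = z%:~R by rewrite kE mulfVK.
  have Hx y : (f k * y) *~ m = y *~ z.
    by rewrite -mulrzAl -rmorphMz -mulrzr km rmorph_int mulrzl.
  by rewrite !rmorph_int !mulrzl -PhMz !Hx PhMz.
have -> : X = f (m%:~R)^-1 * (f m%:~R * X).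
  by rewrite mulrA -rmorphM mulVf // rmorph1 mul1r.
by rewrite HX mulrA -rmorphM [_^-1 * _]mulrC -kE.
Qed.

End Generic.
End PhSec.

Section Main.
Variable P : product_rule.
Hypothesis sP : special P.
Variable X : finType.
Definition Y : finType := (X + X)%type.
Definition M := {mpoly rat[#|Y|]}.
Definition BB := (M * M)%type.
Definition PhM (a b c d : M) : M := Ph P (@mpolyC _ rat) a b c d.

Definition mulB (x y : BB) : BB := (x.1 * y.1, PhM x.1 x.2 y.1 y.2).

Lemma mulBC : commutative mulB.
Proof. by move=> [a b] [c d]; rewrite /mulB /= mulrC /PhM PhC. Qed.

Lemma mulBA : associative mulB.
Proof. by move=> [a b] [c d] [e g]; rewrite /mulB /= mulrA /PhM PhA. Qed.

Lemma mulBDl (x y z : BB) : mulB (x + y) z = mulB x z + mulB y z.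
Proof. by case: x y z => [a b] [c d] [e g]; rewrite /mulB /= mulrDl /PhM PhD. Qed.

Lemma mulBZl (k : rat) (x y : BB) : mulB (k *: x) y = k *: mulB x y.
Proof.
case: x y => [a b] [c d]; rewrite /mulB /=; congr (_, _).
  by rewrite scalerAl.
by rewrite /PhM -!mul_mpolyC (PhZ sP) mul_mpolyC.
Qed.

Definition AB : preAlg := @PreAlg BB mulB mulBC mulBA mulBDl mulBZl.

Definition iota (t : term X) : term Y := subst (fun x => Var (inl x)) t.

Fixpoint Ut (t : term X) : term Y :=
  match t with
  | Var x => Var (inr x)
  | Zero => Zero
  | Scale c u => Scale c (Ut u)
  | Add u v => Add (Ut u) (Ut v)
  | Mul u v => papp P (iota u) (Ut u) (iota v) (Ut v)
  end.

Lemma poly_papp (V : finType) (s1 s2 s3 s4 : term V) :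
  poly_of (papp P s1 s2 s3 s4) =
  Ph P (@mpolyC _ rat) (poly_of s1) (poly_of s2) (poly_of s3) (poly_of s4).
Proof.
rewrite /papp poly_subst /Ph; apply: tev_ext.
by case=> [[|[|[|[|k]]]] Hk].
Qed.

Definition envU (x : X) : UU AB :=
  (0, (poly_of (Var (inl x) : term Y), poly_of (Var (inr x) : term Y))).

Lemma umulE (x y : UU AB) : x * y = umul x y.
Proof. by []. Qed.

Lemma Phi (t : term X) :
  tev (@uinj AB) envU t = (0, (poly_of (iota t), poly_of (Ut t))).
Proof.
elim: t => [x| |c u IH|u IHu v IHv|u IHu v IHv] //=.
- rewrite IH umulE /umul /= mulr0 scale0r addr0 /mulB /= mul0r /PhM (Ph0 sP).
  by rewrite addr0.
- by rewrite IHu IHv; congr (_, _); rewrite /= addr0.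
- rewrite IHu IHv umulE /umul /= mulr0 !scale0r addr0 add0r /mulB /=.
  by rewrite poly_papp.
Qed.

Lemma approx_Ut (u v : term X) : approx u v -> approx (Ut u) (Ut v).
Proof.
move=> H; rewrite /approx; have := approx_tev (@uinj AB) envU H.
by rewrite !Phi => /(congr1 (fun z : UU AB => z.2.2)).
Qed.

Lemma subst_papp (V W : Type) (s : V -> term W) (s1 s2 s3 s4 : term V) :
  subst s (papp P s1 s2 s3 s4) = papp P (subst s s1) (subst s s2) (subst s s3) (subst s s4).
Proof.
rewrite /papp subst_subst; apply: subst_ext.
by case=> [[|[|[|[|k]]]] Hk].
Qed.

Definition sig (D : X -> term X) (y : Y) : term X :=
  match y with inl x => Var x | inr x => D x end.

Lemma subst_iota (D : X -> term X) t : subst (sig D) (iota t) = t.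
Proof. by rewrite /iota subst_subst subst_Var. Qed.

Lemma pext_Ut (D : X -> term X) t : pext P D t = subst (sig D) (Ut t).
Proof.
elim: t => [x| |c u IH|u IHu v IHv|u IHu v IHv] //=; try by rewrite ?IH ?IHu ?IHv.
by rewrite subst_papp !subst_iota IHu IHv.
Qed.

Lemma approx_pext (D : X -> term X) u v :
  approx u v -> approx (pext P D u) (pext P D v).
Proof. by move=> H; rewrite !pext_Ut; apply/approx_subst/approx_Ut. Qed.

End Main.

Theorem mainTheorem9 (P : product_rule) (Sigma X : finType) :
  special P ->
  forall (A : automaton Sigma X) (u v : term X),
    approx u v -> sem P A u = sem P A v.
Proof.
move=> sP A u v H; apply: functional_extensionality => w.
elim: w u v H => [|a w IH] u v H /=.
  by rewrite /sem /=; apply: approx_evalF.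
by rewrite /sem /=; apply: IH; apply: approx_pext.
Qed.
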